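(* Let $F=(f_a)_{a\in D}$ be a planar analytic function on a region $D\subseteq\mathbb C$ and let $T\in\mathbb P$. Then the function $h_T:D\to\mathbb C$, $h_T(a)=\langle f_a,(x-a)^T\rangle$, is holomorphic on $D$.
   Context: Let $\mathbb P$ denote the set of finite planar reduced rooted trees (children of each vertex linearly ordered, no vertex with exactly one child), including the empty tree $\mathbf 1$ and the one-vertex tree $|$; $\deg(T)$ is the number of leaves, $L(T)$ the set of leaves. The algebra $\mathbb C\{x\}_{\mathbb P}$ has basis $\{x^T\}$, $x^{\mathbf 1}=1$, $x^|=x$, with $k$-linear operations $\omega_k$ ($k\ge2$), $\omega_k(x^{T_1},\dots,x^{T_k})=x^T$ where $T$ is obtained by attaching the nonempty $T_i$ in order as subtrees of the children of a new root (if exactly one is nonempty, $T$ is that one; if none, $T=\mathbf 1$); $y^T$ denotes the iteration along $T$ starting from $y$, e.g. $(x-a)^T$. $\mathbb C\{\{x-a\}\}_{\mathbb P}$ is the space of formal series $\sum_T\gamma_T(x-a)^T$ with coefficients $\langle f,(x-a)^T\rangle$. Radius of convergence: $\operatorname{rad}(\sum_T\gamma_T(x-a)^T)=\sup\{\rho\ge0:\sum_T|\gamma_T|\rho^{\deg T}<\infty\}$. Contraction $S|I$ for $I\subseteq L(S)$: the tree obtained from the subtree of $S$ spanned by the root-to-leaf paths to leaves in $I$ by suppressing all vertices with exactly one child; $(S/T)=\#\{I\subseteq L(S):S|I=T\}$. If $|b-a|<\operatorname{rad}(f)$, the expansion of $f\in\mathbb C\{\{x-a\}\}_{\mathbb P}$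 around $b$ is $\sum_T\gamma_T(b)(x-b)^T$ with $\gamma_T(b)=\sum_{U}\langle f,(x-a)^U\rangle(U/T)(b-a)^{\deg U-\deg T}$. A planar analytic function on a region $D$ is a family $F=(f_a)_{a\in D}$ with $f_a\in\mathbb C\{\{x-a\}\}_{\mathbb P}$, $\operatorname{rad}(f_a)>0$, such that whenever $a,b\in D$ and $\operatorname{rad}(f_a)>|b-a|$, the expansion of $f_a$ around $b$ equals $f_b$. *)

(* Defs.v *)
From Stdlib Require Import Reals List Arith.
From Coquelicot Require Import Coquelicot.
Import ListNotations.
Open Scope R_scope.

(** A tree in the paper's sense
    (element of P) is [None] (the empty tree 1) or [Some t] with [t] reduced. *)
Inductive ptree : Type :=
| Lf : ptree
| Nd : list ptree -> ptree.

Definition tree := option ptree.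

Fixpoint nleaves (t : ptree) : nat :=
  match t with
  | Lf => 1%nat
  | Nd l => (fix go (l : list ptree) : nat :=
               match l with nil => 0%nat | c :: l' => (nleaves c + go l')%nat end) l
  end.

Definition deg (T : tree) : nat :=
  match T with None => 0%nat | Some t => nleaves t end.

Fixpoint reduced (t : ptree) : Prop :=
  match t with
  | Lf => True
  | Nd l => (2 <= length l)%nat /\
            (fix go (l : list ptree) : Prop :=
               match l with nil => True | c :: l' => reduced c /\ go l' end) l
  end.

Definition isP (T : tree) : Prop :=
  match T with None => True | Some t => reduced t end.

Fixpoint ptree_eqb (s t : ptree) : bool :=
  match s, t with
  | Lf, Lf => true
  | Nd l1, Nd l2 =>
      (fix go (l1 l2 : list ptree) : bool :=
         match l1, l2 with
         | nil, nil => true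
         | c1 :: r1, c2 :: r2 => andb (ptree_eqb c1 c2) (go r1 r2)
         | _, _ => false
         end) l1 l2
  | _, _ => false
  end.

Definition tree_eqb (S T : tree) : bool :=
  match S, T with
  | None, None => true
  | Some s, Some t => ptree_eqb s t
  | _, _ => false
  end.

(** A subset I of the leaves of a tree with n leaves is a mask
    [m : list bool] of length n (leaves numbered left to right).  [restr t m]
    is the tree spanned by the root-to-leaf paths to the selected leaves, with
    all vertices having exactly one child suppressed; [None] = empty tree. *)
Fixpoint restr (t : ptree) (m : list bool) : option ptree :=
  match t with
  | Lf => match m with true :: _ => Some Lf | _ => None end
  | Nd l =>
      let cs :=
        (fix go (l : list ptree) (m : list bool) : list ptree :=
           match l with
           | nil => nil
           | c :: l' =>
               let k := nleaves c in
               match restr c (firstn k m) with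
               | Some c' => c' :: go l' (skipn k m)
               | None => go l' (skipn k m)
               end
           end) l m in
      match cs with
      | nil => None
      | c :: nil => Some c
      | _ => Some (Nd cs)
      end
  end.

Definition contract (S : tree) (m : list bool) : tree :=
  match S with None => None | Some s => restr s m end.

Fixpoint masks (n : nat) : list (list bool) :=
  match n with
  | O => [nil]
  | S n' => map (cons true) (masks n') ++ map (cons false) (masks n')
  end.

Definition ncontr (S T : tree) : nat :=
  length (filter (fun m => tree_eqb (contract S m) T) (masks (deg S))).

(** Formal planar series sum_T gamma_T (x-a)^T, given by coefficient function
    (only the values on trees in P are relevant). *)
Definition pseries := tree -> C.

Fixpoint Cpow (z : C) (n : nat) : C :=
  match n with O => RtoC 1 | S n' => Cmult z (Cpow z n') end.

Definition sumR (L : list tree) (g : tree -> R) : R := fold_right (fun T s => g T + s) 0 L.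
Definition sumC (L : list tree) (g : tree -> C) : C :=
  fold_right (fun T s => Cplus (g T) s) (RtoC 0) L.

Definition finset_P (L : list tree) : Prop := NoDup L /\ List.Forall isP L.

Definition abs_summable (g : tree -> R) : Prop :=
  exists M : R, forall L, finset_P L -> sumR L (fun T => Rabs (g T)) <= M.

Definition has_sum (g : tree -> C) (s : C) : Prop :=
  forall eps : R, 0 < eps ->
    exists L0, finset_P L0 /\
      forall L, finset_P L -> incl L0 L -> Cmod (Cminus (sumC L g) s) < eps.

Definition rad (f : pseries) : Rbar :=
  Lub_Rbar (fun rho => 0 <= rho /\ abs_summable (fun T => Cmod (f T) * rho ^ deg T)).

(* gamma_T(b) = sum_U <f,(x-a)^U> (U/T) (b-a)^(deg U - deg T) is the coefficient
   of (x-b)^T in the expansion of f (a series around a) around b. *)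
Definition expansion_coef_is (f : pseries) (a b : C) (T : tree) (c : C) : Prop :=
  has_sum (fun U => Cmult (Cmult (f U) (RtoC (INR (ncontr U T))))
                          (Cpow (Cminus b a) (deg U - deg T))) c.

Definition region (D : C -> Prop) : Prop :=
  (exists z, D z) /\ @open C_UniformSpace D /\
  (forall U V : C -> Prop, @open C_UniformSpace U -> @open C_UniformSpace V ->
     (forall z, D z -> U z \/ V z) ->
     (forall z, D z -> U z -> V z -> False) ->
     (exists z, D z /\ U z) -> (exists z, D z /\ V z) -> False).

Definition planar_analytic (D : C -> Prop) (F : C -> pseries) : Prop :=
  (forall a, D a -> Rbar_lt (Finite 0) (rad (F a))) /\
  (forall a b, D a -> D b -> Rbar_lt (Finite (Cmod (Cminus b a))) (rad (F a)) ->
     forall T, isP T -> expansion_coef_is (F a) a b T (F b T)).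

Definition holomorphic_on (D : C -> Prop) (h : C -> C) : Prop :=
  forall a, D a -> @ex_derive C_AbsRing C_NormedModule h a.

(* Main.v *)
Require Import Defs.
From Stdlib Require Import Reals List.
From Coquelicot Require Import Coquelicot.
From Stdlib Require Import Lra Lia ClassicalEpsilon Classical.
Open Scope R_scope.

Lemma sumR_le L g1 g2 : (forall T, g1 T <= g2 T) -> sumR L g1 <= sumR L g2.
Proof. intro H. induction L; simpl; [lra|]. specialize (H a); lra. Qed.
Lemma sumR_scal L k g : sumR L (fun T => k * g T) = k * sumR L g.
Proof. induction L; simpl; [ring| rewrite IHL; ring]. Qed.
Lemma sumC_minus L g1 g2 : sumC L (fun T => Cminus (g1 T) (g2 T)) = Cminus (sumC L g1) (sumC L g2).
Proof. induction L; simpl; [ | rewrite IHL]; ring. Qed.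
Lemma sumC_mult L g k : sumC L (fun T => Cmult (g T) k) = Cmult (sumC L g) k.
Proof. induction L; simpl; [ | rewrite IHL]; ring. Qed.
Lemma sumC_ext L g1 g2 : (forall T, g1 T = g2 T) -> sumC L g1 = sumC L g2.
Proof. intro H; induction L; simpl; [ | rewrite IHL, H]; reflexivity. Qed.
Lemma Cmod_sumC L g : Cmod (sumC L g) <= sumR L (fun T => Cmod (g T)).
Proof. induction L; simpl. rewrite Cmod_0; lra. eapply Rle_trans; [apply Cmod_triangle|]; lra. Qed.
Lemma Cmod_minus_le x y : Cmod (Cminus x y) <= Cmod x + Cmod y.
Proof. unfold Cminus. eapply Rle_trans; [apply Cmod_triangle|]. rewrite Cmod_opp; lra. Qed.

Lemma tree_dec : forall x y : tree, {x = y} + {x <> y}.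
Proof. intros; apply excluded_middle_informative. Qed.

Lemma has_sum_minus g1 g2 s1 s2 : has_sum g1 s1 -> has_sum g2 s2 ->
  has_sum (fun U => Cminus (g1 U) (g2 U)) (Cminus s1 s2).
Proof.
  intros H1 H2 eps Heps.
  destruct (H1 (eps/2)) as [L1 [[N1 F1] P1]]; [lra|].
  destruct (H2 (eps/2)) as [L2 [[N2 F2] P2]]; [lra|].
  exists (nodup tree_dec (L1 ++ L2)). split.
  - split. apply NoDup_nodup. apply Forall_forall; intros x Hx.
    apply nodup_In in Hx. apply in_app_or in Hx.
    destruct Hx as [Hx|Hx]; [eapply Forall_forall in F1 | eapply Forall_forall in F2]; eauto.
  - intros L HL Hincl. rewrite sumC_minus.
    assert (Hi1: incl L1 L) by (intros x Hx; apply Hincl, nodup_In, in_or_app; auto).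
    assert (Hi2: incl L2 L) by (intros x Hx; apply Hincl, nodup_In, in_or_app; auto).
    specialize (P1 L HL Hi1); specialize (P2 L HL Hi2).
    replace (Cminus (Cminus (sumC L g1) (sumC L g2)) (Cminus s1 s2)) with
      (Cminus (Cminus (sumC L g1) s1) (Cminus (sumC L g2) s2)) by ring.
    eapply Rle_lt_trans; [apply Cmod_minus_le|]. lra.
Qed.

Lemma has_sum_mult g s k : has_sum g s -> has_sum (fun U => Cmult (g U) k) (Cmult s k).
Proof.
  intros H eps Heps.
  assert (Hk := Cmod_ge_0 k).
  destruct (H (eps / (Cmod k + 1))) as [L0 [HL0 P]].
  { apply Rdiv_lt_0_compat; lra. }
  exists L0; split; auto. intros L HL Hi. specialize (P L HL Hi).
  rewrite sumC_mult.
  replace (Cminus (Cmult (sumC L g) k) (Cmult s k)) with (Cmult (Cminus (sumC L g) s) k) by ring.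
  rewrite Cmod_mult.
  assert (Hm := Cmod_ge_0 (Cminus (sumC L g) s)).
  apply Rle_lt_trans with (eps / (Cmod k + 1) * Cmod k).
  - apply Rmult_le_compat_r; lra.
  - assert (eps - eps / (Cmod k + 1) * Cmod k = eps / (Cmod k + 1)) by (field; lra).
    assert (0 < eps / (Cmod k + 1)) by (apply Rdiv_lt_0_compat; lra). lra.
Qed.

Lemma has_sum_ext g1 g2 s : (forall U, g1 U = g2 U) -> has_sum g1 s -> has_sum g2 s.
Proof.
  intros E H eps Heps. destruct (H eps Heps) as [L0 [HL0 P]]. exists L0; split; auto.
  intros L HL Hi. rewrite <- (sumC_ext L g1 g2 E). auto.
Qed.

Lemma has_sum_bound g s B : has_sum g s ->
  (forall L, finset_P L -> sumR L (fun U => Cmod (g U)) <= B) -> Cmod s <= B.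
Proof.
  intros H HB. destruct (Rle_lt_dec (Cmod s) B) as [|Hlt]; auto.
  destruct (H (Cmod s - B)) as [L0 [HL0 P]]; [lra|].
  specialize (P L0 HL0 (incl_refl _)). specialize (HB L0 HL0).
  assert (Hs := Cmod_sumC L0 g).
  assert (Hm := Cmod_minus_le (sumC L0 g) (Cminus (sumC L0 g) s)).
  replace (Cminus (sumC L0 g) (Cminus (sumC L0 g) s)) with s in Hm by ring. lra.
Qed.

Lemma Cmod_Cpow z k : Cmod (Cpow z k) = Cmod z ^ k.
Proof. induction k; simpl. apply Cmod_1. rewrite Cmod_mult, IHk; reflexivity. Qed.

Lemma masks_length n : length (masks n) = (2 ^ n)%nat.
Proof. induction n; simpl; auto. rewrite length_app, !length_map, IHn. lia. Qed.

Lemma ncontr_le U T : INR (ncontr U T) <= 2 ^ deg U.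
Proof.
  unfold ncontr. eapply Rle_trans. apply le_INR, filter_length_le.
  rewrite masks_length, pow_INR. simpl INR. replace (1+1) with 2 by ring. lra.
Qed.

Lemma rad_pos f : Rbar_lt (Finite 0) (rad f) -> exists rho, 0 < rho /\ Rbar_le (Finite rho) (rad f) /\
  abs_summable (fun T => Cmod (f T) * rho ^ deg T).
Proof.
  intro H. unfold rad in *.
  destruct (Lub_Rbar_correct (fun rho => 0 <= rho /\ abs_summable (fun T => Cmod (f T) * rho ^ deg T))) as [Hub Hlub].
  apply NNPP; intro Hn.
  assert (Hle : Rbar_le (Lub_Rbar (fun rho => 0 <= rho /\ abs_summable (fun T => Cmod (f T) * rho ^ deg T))) (Finite 0)).
  { apply Hlub. intros x [Hx0 Hx]. simpl. destruct (Rle_lt_dec x 0); auto.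
    exfalso; apply Hn. exists x; repeat split; auto. }
  set (l := Lub_Rbar _) in *. destruct l; simpl in *; lra.
Qed.

Lemma Cmod_RtoC_pos x : 0 <= x -> Cmod (RtoC x) = x.
Proof. intro; rewrite Cmod_R; apply Rabs_pos_eq; auto. Qed.

Lemma RtoC_neq0 x : x <> 0 -> RtoC x <> RtoC 0.
Proof. intros H E; apply H; apply (f_equal fst) in E; simpl in E; auto. Qed.

Lemma Cmod_pos_neq z : 0 < Cmod z -> z <> RtoC 0.
Proof. intros H E; rewrite E, Cmod_0 in H; lra. Qed.

Lemma Cplus_minus_eq (a y : C) : y = Cplus a (Cminus y a).
Proof. ring. Qed.
Lemma Cplus_0_eq (a : C) : Cplus a (RtoC 0) = a.
Proof. ring. Qed.

Theorem mainTheorem5 (D : C -> Prop) (F : C -> pseries) (T : tree) :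
  region D -> planar_analytic D F -> isP T ->
  holomorphic_on D (fun a => F a T).
Proof.
  intros HD [Hrad Hexp] HT a Da.
  destruct HD as [_ [Hopen _]].
  destruct (Hopen a Da) as [rD HrD].
  destruct (rad_pos (F a) (Hrad a Da)) as [rho [Hrho [Hrr [M HM]]]].
  set (f := F a) in *.
  set (dT := deg T).
  set (c := fun U => Cmult (f U) (RtoC (INR (ncontr U T)))).
  set (n := fun U => (deg U - dT)%nat).
  set (h := fun b => F b T).
  set (d1 := rho / 2).
  assert (Hd1e : d1 = rho / 2) by reflexivity.
  assert (Hd1 : 0 < d1) by lra.
  assert (HrD0 := cond_pos rD).
  set (d2 := Rmin d1 (rD / 2)).
  assert (Hd2 : 0 < d2) by (unfold d2; apply Rmin_glb_lt; lra).
  assert (Hd21 : d2 <= d1) by apply Rmin_l.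
  assert (Hd2r : d2 <= rD / 2) by apply Rmin_r.
  assert (HM0 : 0 <= M).
  { apply Rle_trans with (sumR nil (fun T => Rabs (Cmod (f T) * rho ^ deg T))); [simpl; lra|].
    apply HM. split; constructor. }
  assert (Hpd : 0 < d1 ^ (2 + dT)) by (apply pow_lt; auto).
  set (K := M / d1 ^ (2 + dT)).
  assert (HK : 0 <= K) by (unfold K; apply Rdiv_le_0_compat; lra).
  assert (HA : forall b, Cmod (Cminus b a) <= d2 ->
     has_sum (fun U => Cmult (c U) (Cpow (Cminus b a) (n U))) (h b)).
  { intros b Hb. apply Hexp; auto.
    - apply HrD. apply (@norm_compat1 C_AbsRing C_NormedModule). change (Cmod (Cminus b a) < rD). idtac. eapply Rle_lt_trans; [exact Hb|]. lra.
    - eapply Rbar_lt_le_trans; [|exact Hrr]. simpl. lra. }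
  set (q := fun z => Cdiv (Cminus (h (Cplus a z)) (h a)) z).
  set (e := fun z U => match n U with O => RtoC 0 | S m => Cmult (c U) (Cpow z m) end).
  assert (HB : forall z, z <> RtoC 0 -> Cmod z <= d2 -> has_sum (e z) (q z)).
  { intros z Hz0 Hz.
    assert (E1 : Cminus (Cplus a z) a = z) by ring.
    assert (E2 : Cminus a a = RtoC 0) by ring.
    assert (H1 := HA (Cplus a z) ltac:(rewrite E1; auto)).
    assert (H2 := HA a ltac:(rewrite E2, Cmod_0; lra)).
    rewrite E1 in H1. rewrite E2 in H2.
    assert (H3 := has_sum_mult _ _ (Cinv z) (has_sum_minus _ _ _ _ H1 H2)).
    eapply has_sum_ext; [|exact H3].
    intro U. simpl. unfold e. destruct (n U) as [|m]; simpl.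
    - field; auto.
    - field; auto. }
  assert (HP : forall z w U, Cmod z <= d1 -> Cmod w <= d1 ->
    Cmod (Cminus (e z U) (e w U)) <= ((Cmod z + Cmod w) / d1 ^ (2 + dT)) * Rabs (Cmod (f U) * rho ^ deg U)).
  { intros z w U Hz Hw.
    assert (Hz0 := Cmod_ge_0 z). assert (Hw0 := Cmod_ge_0 w).
    assert (Hnn : 0 <= ((Cmod z + Cmod w) / d1 ^ (2 + dT)) * Rabs (Cmod (f U) * rho ^ deg U)).
    { apply Rmult_le_pos; [apply Rdiv_le_0_compat; lra | apply Rabs_pos]. }
    unfold e. destruct (n U) as [|[|m]] eqn:Hn.
    - match goal with |- Cmod ?x <= _ => replace x with (RtoC 0) by ring end. rewrite Cmod_0; lra.
    - simpl. match goal with |- Cmod ?x <= _ => replace x with (RtoC 0) by ring end. rewrite Cmod_0; exact Hnn.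
    - assert (Hdeg : deg U = (m + (2 + dT))%nat) by (unfold n in Hn; cbv beta in Hn; lia).
      match goal with |- Cmod ?x <= _ => replace x with (Cmult (c U) (Cminus (Cpow z (S m)) (Cpow w (S m)))) by ring end.
      rewrite Cmod_mult.
      assert (HcU : Cmod (c U) <= Cmod (f U) * 2 ^ deg U).
      { unfold c. rewrite Cmod_mult, Cmod_RtoC_pos by apply pos_INR.
        apply Rmult_le_compat_l; [apply Cmod_ge_0 | apply ncontr_le]. }
      assert (Hc0 := Cmod_ge_0 (c U)).
      assert (Hdiff : Cmod (Cminus (Cpow z (S m)) (Cpow w (S m))) <= (Cmod z + Cmod w) * d1 ^ m).
      { eapply Rle_trans; [apply Cmod_minus_le|]. rewrite !Cmod_Cpow. simpl.
        assert (Cmod z ^ m <= d1 ^ m) by (apply pow_incr; lra).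
        assert (Cmod w ^ m <= d1 ^ m) by (apply pow_incr; lra).
        assert (Cmod z * Cmod z ^ m <= Cmod z * d1 ^ m) by (apply Rmult_le_compat_l; lra).
        assert (Cmod w * Cmod w ^ m <= Cmod w * d1 ^ m) by (apply Rmult_le_compat_l; lra).
        lra. }
      assert (Hdm : 0 <= d1 ^ m) by (apply pow_le; lra).
      assert (Hf0 := Cmod_ge_0 (f U)).
      assert (H2p : 0 <= 2 ^ deg U) by (apply pow_le; lra).
      eapply Rle_trans.
      { apply Rmult_le_compat; [exact Hc0 | apply Cmod_ge_0 | exact HcU | exact Hdiff]. }
      right. rewrite Rabs_pos_eq by (apply Rmult_le_pos; [lra | apply pow_le; lra]).
      replace rho with (2 * d1) by lra. rewrite Rpow_mult_distr, Hdeg, !pow_add.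
      field. repeat split; try apply pow_nonzero; lra. }
  assert (HC : forall z w, z <> RtoC 0 -> w <> RtoC 0 -> Cmod z <= d2 -> Cmod w <= d2 ->
    Cmod (Cminus (q z) (q w)) <= K * (Cmod z + Cmod w)).
  { intros z w Hz Hw Hz2 Hw2.
    apply (has_sum_bound _ _ _ (has_sum_minus _ _ _ _ (HB z Hz Hz2) (HB w Hw Hw2))).
    intros L HL.
    apply Rle_trans with (sumR L (fun U => ((Cmod z + Cmod w) / d1 ^ (2 + dT)) * Rabs (Cmod (f U) * rho ^ deg U))).
    { apply sumR_le; intro U; apply HP; lra. }
    rewrite sumR_scal. specialize (HM L HL).
    assert (Hz0 := Cmod_ge_0 z). assert (Hw0 := Cmod_ge_0 w).
    apply Rle_trans with ((Cmod z + Cmod w) / d1 ^ (2 + dT) * M).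
    { apply Rmult_le_compat_l; auto. apply Rdiv_le_0_compat; lra. }
    right. unfold K. field. lra. }
  set (u := fun N : nat => q (RtoC (d2 / (INR N + 1)))).
  assert (Hu : forall N : nat, RtoC (d2 / (INR N + 1)) <> RtoC 0 /\ Cmod (RtoC (d2 / (INR N + 1))) = d2 / (INR N + 1)).
  { intro N. assert (HN := pos_INR N). assert (0 < d2 / (INR N + 1)) by (apply Rdiv_lt_0_compat; lra).
    split. apply RtoC_neq0; lra. apply Cmod_RtoC_pos; lra. }
  assert (Hsmall : forall N k, (0 < N)%nat -> (N <= k)%nat -> d2 / (INR k + 1) <= d2 * / INR N).
  { intros N k HN Hk. unfold Rdiv. apply Rmult_le_compat_l; [lra|].
    apply Rinv_le_contravar; [apply lt_0_INR; auto|]. apply le_INR in Hk. lra. }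
  assert (Hle2 : forall N, d2 / (INR N + 1) <= d2).
  { intro N. assert (HN := pos_INR N). unfold Rdiv. rewrite <- (Rmult_1_r d2) at 2.
    apply Rmult_le_compat_l; [lra|]. rewrite <- Rinv_1. apply Rinv_le_contravar; lra. }
  assert (Hcv : exists l : C, filterlim u eventually (locally l)).
  { apply (proj1 (@filterlim_locally_cauchy nat (CompleteNormedModule.CompleteSpace _ C_CompleteNormedModule) eventually eventually_filter u)).
    intro eps. assert (Heps := cond_pos eps).
    destruct (archimed_cor1 (eps / (2 * K * d2 + 1))) as [N [HN HN0]].
    { apply Rdiv_lt_0_compat; [lra|]. assert (0 <= K * d2) by (apply Rmult_le_pos; lra). lra. }
    exists (fun k => (N <= k)%nat). split. { exists N; auto. }
    intros v w Hv Hw. apply (@norm_compat1 C_AbsRing C_NormedModule).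
    change (Cmod (Cminus (u w) (u v)) < eps).
    destruct (Hu v) as [Hv1 Hv2]. destruct (Hu w) as [Hw1 Hw2].
    unfold u. eapply Rle_lt_trans. apply HC; [exact Hw1|exact Hv1| rewrite Hw2; apply Hle2 | rewrite Hv2; apply Hle2].
    rewrite Hv2, Hw2.
    assert (A1 := Hsmall N v HN0 Hv). assert (A2 := Hsmall N w HN0 Hw).
    assert (HNp : 0 < / INR N) by (apply Rinv_0_lt_compat, lt_0_INR; auto).
    apply Rle_lt_trans with (K * (2 * (d2 * / INR N))).
    { apply Rmult_le_compat_l; lra. }
    assert (HKd : 0 <= K * d2) by (apply Rmult_le_pos; lra).
    assert (E : K * (2 * (d2 * / INR N)) = (2 * K * d2) * / INR N) by ring. rewrite E.
    apply Rle_lt_trans with ((2 * K * d2 + 1) * / INR N). { apply Rmult_le_compat_r; lra. }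
    apply Rlt_le_trans with ((2 * K * d2 + 1) * (eps / (2 * K * d2 + 1))).
    { apply Rmult_lt_compat_l; lra. }
    right; field; lra. }
  destruct Hcv as [l Hl].
  assert (Hnf := @norm_factor_gt_0 C_AbsRing C_NormedModule).
  assert (Hlim : forall eps, 0 < eps -> exists N, forall k, (N <= k)%nat -> Cmod (Cminus (u k) l) < eps).
  { intros eps Heps.
    assert (Hp : 0 < eps / (@norm_factor C_AbsRing C_NormedModule)) by (apply Rdiv_lt_0_compat; lra).
    destruct (Hl (ball l (mkposreal _ Hp))) as [N HN].
    { exists (mkposreal _ Hp); auto. }
    exists N. intros k Hk. specialize (HN k Hk).
    apply (@norm_compat2 C_AbsRing C_NormedModule) in HN. simpl in HN.
    change (Cmod (Cminus (u k) l) < eps).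
    replace eps with (@norm_factor C_AbsRing C_NormedModule * (eps / (@norm_factor C_AbsRing C_NormedModule))) by (field; lra).
    exact HN. }
  assert (HL : forall z, z <> RtoC 0 -> Cmod z <= d2 -> Cmod (Cminus (q z) l) <= K * Cmod z).
  { intros z Hz Hz2. apply Rle_plus_epsilon. intros eps Heps.
    destruct (Hlim (eps / 2)) as [N1 HN1]; [lra|].
    assert (HKd : 0 <= K * d2) by (apply Rmult_le_pos; lra).
    destruct (archimed_cor1 (eps / (2 * (K * d2 + 1)))) as [N2 [HN2 HN20]].
    { apply Rdiv_lt_0_compat; lra. }
    set (k := (N1 + N2)%nat).
    specialize (HN1 k ltac:(unfold k; lia)).
    destruct (Hu k) as [Hk1 Hk2].
    assert (Hqk := HC z _ Hz Hk1 Hz2 ltac:(rewrite Hk2; apply Hle2)).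
    rewrite Hk2 in Hqk.
    assert (A := Hsmall N2 k HN20 ltac:(unfold k; lia)).
    assert (Htri : Cmod (Cminus (q z) l) <= Cmod (Cminus (q z) (u k)) + Cmod (Cminus (u k) l)).
    { replace (Cminus (q z) l) with (Cplus (Cminus (q z) (u k)) (Cminus (u k) l)) by ring.
      apply Cmod_triangle. }
    assert (HNp : 0 < / INR N2) by (apply Rinv_0_lt_compat, lt_0_INR; auto).
    assert (B : K * (d2 / (INR k + 1)) <= eps / 2).
    { apply Rle_trans with (K * (d2 * / INR N2)). { apply Rmult_le_compat_l; lra. }
      replace (K * (d2 * / INR N2)) with ((K * d2) * / INR N2) by ring.
      apply Rle_trans with ((K * d2) * (eps / (2 * (K * d2 + 1)))). { apply Rmult_le_compat_l; lra. }
      assert (eps / 2 - (K * d2) * (eps / (2 * (K * d2 + 1))) = eps / (2 * (K * d2 + 1))) by (field; lra).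
      assert (0 < eps / (2 * (K * d2 + 1))) by (apply Rdiv_lt_0_compat; lra). lra. }
    unfold u in HN1, Htri. rewrite Rmult_plus_distr_l in Hqk. lra. }
  exists l. split. { apply is_linear_scal_l. }
  intros x Hx. apply (@is_filter_lim_locally_unique C_AbsRing (AbsRing_NormedModule C_AbsRing)) in Hx. rewrite <- Hx. clear x Hx.
  intro eps. assert (Heps := cond_pos eps).
  assert (Hnf2 := @norm_factor_gt_0 C_AbsRing (AbsRing_NormedModule C_AbsRing)).
  assert (Hr : 0 < Rmin d2 (eps / (K + 1)) / (@norm_factor C_AbsRing (AbsRing_NormedModule C_AbsRing))).
  { apply Rdiv_lt_0_compat; [|lra]. apply Rmin_glb_lt; [lra|]. apply Rdiv_lt_0_compat; lra. }
  exists (mkposreal _ Hr). intros y Hy.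
  apply (@norm_compat2 C_AbsRing (AbsRing_NormedModule C_AbsRing)) in Hy. simpl in Hy.
  replace (@norm_factor C_AbsRing (AbsRing_NormedModule C_AbsRing) * (Rmin d2 (eps / (K + 1)) / (@norm_factor C_AbsRing (AbsRing_NormedModule C_AbsRing))))
    with (Rmin d2 (eps / (K + 1))) in Hy by (field; lra).
  change (Cmod (Cminus (Cminus (F y T) (F a T)) (Cmult (Cminus y a) l)) <= eps * Cmod (Cminus y a)).
  change (Cmod (Cminus y a) < Rmin d2 (eps / (K + 1))) in Hy.
  assert (Hm1 := Rmin_l d2 (eps / (K + 1))). assert (Hm2 := Rmin_r d2 (eps / (K + 1))).
  set (z := Cminus y a) in *.
  assert (Hy' : @eq C y (Cplus a z)) by (unfold z; apply Cplus_minus_eq).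
  assert (Hz0 := Cmod_ge_0 z).
  destruct (classic (z = RtoC 0)) as [Hz|Hz].
  - assert (Hya : y = a) by (rewrite Hy', Hz; apply Cplus_0_eq). rewrite Hz. rewrite Hya.
    replace (Cminus (Cminus (F a T) (F a T)) (Cmult (RtoC 0) l)) with (RtoC 0) by ring.
    rewrite Cmod_0. lra.
  - replace (Cminus (Cminus (F y T) (F a T)) (Cmult z l)) with (Cmult z (Cminus (q z) l)).
    2:{ unfold q, h. rewrite <- Hy'. field. exact Hz. }
    rewrite Cmod_mult.
    assert (H1 := HL z Hz ltac:(lra)).
    apply Rmult_le_compat_l with (r := Cmod z) in H1; auto.
    assert (K * Cmod z <= eps).
    { apply Rle_trans with (K * (eps / (K + 1))). { apply Rmult_le_compat_l; lra. }
      assert (eps - K * (eps / (K + 1)) = eps / (K + 1)) by (field; lra).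
      assert (0 < eps / (K + 1)) by (apply Rdiv_lt_0_compat; lra). lra. }
    assert (Cmod z * (K * Cmod z) <= Cmod z * eps) by (apply Rmult_le_compat_l; lra).
    lra.
Qed.
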